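(* Let $G$ be a simplicial group such that $\pi_1(G)$ is finite. Then $H^2(G,\mathbb Z)\cong H^2(\pi_0(G),\mathbb Z)$, where $\mathbb Z$ carries the trivial action.
   Context: Simplicial group $G$ with faces $d_k$; Moore complex $N_0G=G_0$, $N_nG=\bigcap_{k=1}^n\ker d_k$ with differential $d_0$; $B_nNG=d_0(N_{n+1}G)$; $\pi_0(G)=G_0/B_0NG$, $\pi_1(G)=(N_1G\cap\ker d_0)/B_1NG$. $H^n(G,M)$ is the cohomology of $C^n(G,M)=\mathrm{Map}(G_{n-1}\times\cdots\times G_0,M)$ with $(dc)(g_n,\dots,g_0)=c(d_0g_n,\dots,d_0g_1)+\sum_{k=1}^n(-1)^kc(d_kg_n,\dots,d_kg_{k+1},(d_kg_k)g_{k-1},g_{k-2},\dots,g_0)+(-1)^{n+1}\langle g_n\rangle\cdot c(g_{n-1},\dots,g_0)$, $\langle g\rangle$ being the class of $d_1\cdots d_n(g)$ in $\pi_0(G)$ (for trivial coefficients the action is trivial). $H^2(\pi_0(G),\mathbb Z)$ is ordinary group cohomology. *)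

(* Defs.v *)
From HB Require Import structures.
From mathcomp Require Import all_boot all_order all_algebra.
From Stdlib Require List.
Unset Printing Implicit Defensive.
Import Order.TTheory GRing.Theory Num.Theory.
Local Open Scope ring_scope.

Record grp := Grp {
  gcar :> Type;
  gmul : gcar -> gcar -> gcar;
  gone : gcar;
  ginv : gcar -> gcar;
  gmulA : forall x y z, gmul x (gmul y z) = gmul (gmul x y) z;
  gmul1l : forall x, gmul gone x = x;
  gmulVl : forall x, gmul (ginv x) x = gone
}.
Arguments gmul {g}. Arguments gone {g}. Arguments ginv {g}.

Definition is_hom (A B : grp) (f : A -> B) :=
  forall x y, f (gmul x y) = gmul (f x) (f y).
Arguments is_hom {A B}.

(* ---------- Simplicial groups ----------
   sg n = G_n; face n i : G_{n+1} -> G_n is d_i (0 <= i <= n+1);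
   degen n j : G_n -> G_{n+1} is s_j (0 <= j <= n). *)
Record sgrp := SGrp {
  sg : nat -> grp;
  face : forall n, nat -> sg n.+1 -> sg n;
  degen : forall n, nat -> sg n -> sg n.+1;
  face_hom : forall n i, (i <= n.+1)%N -> is_hom (face n i);
  degen_hom : forall n j, (j <= n)%N -> is_hom (degen n j);
  face_face : forall n i j (x : sg n.+2), (i < j <= n.+2)%N ->
     face n i (face n.+1 j x) = face n j.-1 (face n.+1 i x);
  face_degen_lt : forall n i j (x : sg n.+1), (i < j <= n.+1)%N ->
     face n.+1 i (degen n.+1 j x) = degen n j.-1 (face n i x);
  face_degen_eq : forall n j (x : sg n), (j <= n)%N ->
     face n j (degen n j x) = x /\ face n j.+1 (degen n j x) = x;
  face_degen_gt : forall n i j (x : sg n.+1), (j.+1 < i <= n.+2)%N ->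
     face n.+1 i (degen n.+1 j x) = degen n j (face n i.-1 x);
  degen_degen : forall n i j (x : sg n), (i <= j <= n)%N ->
     degen n.+1 i (degen n j x) = degen n.+1 j.+1 (degen n i x)
}.

Section Moore.
Variable G : sgrp.

(* N_{n+1} G = intersection of ker d_k, 1 <= k <= n+1 ;  N_0 G = G_0 *)
Definition NG (n : nat) (x : sg G n.+1) : Prop :=
  forall k, (1 <= k <= n.+1)%N -> face G n k x = gone.

Definition BNG (n : nat) (y : sg G n) : Prop :=
  exists2 x, NG n x & face G n 0 x = y.

Definition Z1NG (x : sg G 1) : Prop := NG 0 x /\ face G 0 0 x = gone.

(* pi_1(G) = Z1NG / B_1NG is finite: finitely many cosets *)
Definition pi1_finite : Prop :=
  exists s : seq (sg G 1),
    (forall x, List.In x s -> Z1NG x) /\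
    (forall z, Z1NG z -> exists2 x, List.In x s & BNG 1 (gmul (ginv x) z)).

(* (Q, p) presents pi_0(G) = G_0 / B_0NG *)
Definition presents_pi0 (Q : grp) (p : sg G 0 -> Q) : Prop :=
  [/\ is_hom p, (forall q, exists y, p y = q) & (forall y, p y = gone <-> BNG 0 y)].

(* ---------- cochains C^n(G,Z) = Map(G_{n-1} x ... x G_0, Z) ---------- *)
Fixpoint STup (n : nat) : Type :=
  match n with 0 => unit | m.+1 => (sg G m * STup m)%type end.

(* (g_n,...,g_0) |-> (d_k g_n, ..., d_k g_{k+1}, (d_k g_k) g_{k-1}, g_{k-2}, ..., g_0) *)
Fixpoint sdelta (n k : nat) : STup n.+1 -> STup n :=
  match n return STup n.+1 -> STup n with
  | 0 => fun _ => tt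
  | m.+1 => fun t =>
      if (k <= m)%N then (face G m k t.1, sdelta m k t.2)
      else (gmul (face G m m.+1 t.1) t.2.1, t.2.2)
  end.

Definition sdiff (n : nat) (c : STup n -> int) : STup n.+1 -> int :=
  fun t => \sum_(k < n.+1) (-1) ^+ k * c (sdelta n k t) + (-1) ^+ n.+1 * c t.2.

Definition scocycle (n : nat) (c : STup n -> int) : Prop :=
  forall t, sdiff n c t = 0.

Definition scobound (n : nat) : (STup n -> int) -> Prop :=
  match n with
  | 0 => fun c => forall t, c t = 0
  | m.+1 => fun c => exists b : STup m -> int, forall t, c t = sdiff m b t
  end.
End Moore.

Section GroupCohom.
Variable Q : grp.

Fixpoint QTup (n : nat) : Type :=
  match n with 0 => unit | m.+1 => (gcar Q * QTup m)%type end.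

(* (q_1,...,q_{n+1}) |-> (q_1,...,q_{i+1} q_{i+2},...,q_{n+1})   (0 <= i < n) *)
Fixpoint qmerge (n i : nat) : QTup n.+1 -> QTup n :=
  match n return QTup n.+1 -> QTup n with
  | 0 => fun _ => tt
  | m.+1 => fun t =>
      match i with
      | 0 => (gmul t.1 t.2.1, t.2.2)
      | j.+1 => (t.1, qmerge m j t.2)
      end
  end.

Fixpoint qdroplast (n : nat) : QTup n.+1 -> QTup n :=
  match n return QTup n.+1 -> QTup n with
  | 0 => fun _ => tt
  | m.+1 => fun t => (t.1, qdroplast m t.2)
  end.

Definition qdiff (n : nat) (c : QTup n -> int) : QTup n.+1 -> int :=
  fun t => c t.2 + \sum_(i < n) (-1) ^+ i.+1 * c (qmerge n i t)
           + (-1) ^+ n.+1 * c (qdroplast n t).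

Definition qcocycle (n : nat) (c : QTup n -> int) : Prop :=
  forall t, qdiff n c t = 0.

Definition qcobound (n : nat) : (QTup n -> int) -> Prop :=
  match n with
  | 0 => fun c => forall t, c t = 0
  | m.+1 => fun c => exists b : QTup m -> int, forall t, c t = qdiff m b t
  end.
End GroupCohom.

(* An isomorphism of abelian groups ZA/BA ~= ZB/BB (subquotients of the
   pointwise groups X -> int and Y -> int), described on representatives:
   f induces a well-defined, additive, injective and surjective map. *)
Definition quot_iso (X Y : Type)
    (ZA BA : (X -> int) -> Prop) (ZB BB : (Y -> int) -> Prop) : Prop :=
  exists f : (X -> int) -> (Y -> int),
  [/\ forall a, ZA a -> ZB (f a),
      forall a a', ZA a -> ZA a' -> BA (fun x => a x - a' x) ->
                   BB (fun y => f a y - f a' y),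
      forall a a', ZA a -> ZA a' ->
                   BB (fun y => f (fun x => a x + a' x) y - f a y - f a' y),
      forall a, ZA a -> BB (f a) -> BA a
    & forall b, ZB b -> exists2 a, ZA a & BB (fun y => b y - f a y)].

Definition Hn_iso (G : sgrp) (Q : grp) (n : nat) : Prop :=
  quot_iso (STup G n) (QTup Q n) (@scocycle G n) (@scobound G n) (@qcocycle Q n) (@qcobound Q n).

(* Main.v *)
Require Import Defs.
From mathcomp Require Import all_boot all_order all_algebra.
From Stdlib Require Import Ring ClassicalEpsilon.
Import GRing.Theory.
Local Open Scope ring_scope.

Definition iadd (x y : int) : int := x + y.
Definition imul (x y : int) : int := x * y.
Definition iopp (x : int) : int := - x.
Definition isub (x y : int) : int := x - y.
Definition izero : int := 0.
Definition ione : int := 1.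
Lemma int_ring : @ring_theory int izero ione iadd imul isub iopp eq.
Proof. rewrite /iadd /imul /isub /iopp /izero /ione. split=> //; [exact: add0r|exact: addrC|exact: addrA|exact: mul1r|exact: mulrC|exact: mulrA|exact: mulrDl|exact: subrr]. Qed.
Add Ring intr : int_ring.
Lemma iaddE (x y : int) : x + y = iadd x y. Proof. by []. Qed.
Lemma imulE (x y : int) : x * y = imul x y. Proof. by []. Qed.
Lemma ioppE (x : int) : - x = iopp x. Proof. by []. Qed.
Lemma i0E : (0%R : int) = izero. Proof. by []. Qed.
Lemma i1E : (1%R : int) = ione. Proof. by []. Qed.
Ltac iring := rewrite ?iaddE ?imulE ?ioppE ?i0E ?i1E; match goal with |- @eq _ ?a ?b => change (@eq int a b) end; ring.

Arguments gmulA {g}. Arguments gmul1l {g}. Arguments gmulVl {g}.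
Section Grp.
Variable A : grp.
Local Notation "x * y" := (gmul x y).
Local Notation "x ^-1" := (ginv x).
Local Notation "1" := (@gone A).
Lemma gmulVr (x : A) : x * x^-1 = 1.
Proof.
have e: x * x^-1 = (x * x^-1)^-1 * (x * x^-1) * (x * x^-1).
  by rewrite gmulVl gmul1l.
have yy: (x * x^-1) * (x * x^-1) = x * x^-1.
  by rewrite -gmulA (gmulA (ginv x) x) gmulVl gmul1l.
by rewrite e -gmulA yy gmulVl.
Qed.
Lemma gmul1r (x : A) : x * 1 = x.
Proof. by rewrite -(gmulVl x) gmulA gmulVr gmul1l. Qed.
Lemma gmulKl (x y : A) : x^-1 * (x * y) = y.
Proof. by rewrite gmulA gmulVl gmul1l. Qed.
Lemma gmulKr (x y : A) : x * (x^-1 * y) = y.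
Proof. by rewrite gmulA gmulVr gmul1l. Qed.
Lemma gcancl (x y z : A) : x * y = x * z -> y = z.
Proof. by move=> e; rewrite -(gmulKl x y) e gmulKl. Qed.
Lemma ginv_uniq (x y : A) : y * x = 1 -> y = x^-1.
Proof. move=> e; apply: (gcancl x); apply: (gcancl y). by rewrite gmulVr gmul1r gmulA e gmul1l. Qed.
Lemma ginvM (x y : A) : (x * y)^-1 = y^-1 * x^-1.
Proof. symmetry; apply: ginv_uniq. by rewrite gmulA -(gmulA _ _ x) gmulVl gmul1r gmulVl. Qed.
Lemma ginvK (x : A) : (x^-1)^-1 = x.
Proof. symmetry; apply: ginv_uniq; exact: gmulVr. Qed.
Lemma ginv1 : (1 : A)^-1 = 1.
Proof. symmetry; apply: ginv_uniq; exact: gmul1l. Qed.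
End Grp.
Arguments gmulVr {A}. Arguments gmul1r {A}. Arguments gmulKl {A}. Arguments gmulKr {A}. Arguments gcancl {A}. Arguments ginv_uniq {A}. Arguments ginvM {A}. Arguments ginvK {A}. Arguments ginv1 {A}.

Section Hom.
Variables A B : grp.
Variable f : A -> B.
Hypothesis hf : is_hom f.
Lemma hom1 : f gone = gone.
Proof. apply: (gcancl (f gone)). by rewrite -hf !gmul1r. Qed.
Lemma homV x : f (ginv x) = ginv (f x).
Proof. apply: ginv_uniq. by rewrite -hf gmulVl hom1. Qed.
End Hom.
Arguments hom1 {A B f}. Arguments homV {A B f}.

Section Simp.
Variable G : sgrp.
Local Notation d0 := (face G 0 0).
Local Notation d1 := (face G 0 1).
Local Notation D0 := (face G 1 0).
Local Notation D1 := (face G 1 1).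
Local Notation D2 := (face G 1 2).
Local Notation s0 := (degen G 0 0).
Local Notation S0 := (degen G 1 0).
Local Notation S1 := (degen G 1 1).
Local Notation "x * y" := (gmul x y).

Lemma hd0 : is_hom d0. Proof. exact: face_hom. Qed.
Lemma hd1 : is_hom d1. Proof. exact: face_hom. Qed.
Lemma hD0 : is_hom D0. Proof. exact: face_hom. Qed.
Lemma hD1 : is_hom D1. Proof. exact: face_hom. Qed.
Lemma hD2 : is_hom D2. Proof. exact: face_hom. Qed.
Lemma hs0 : is_hom s0. Proof. exact: degen_hom. Qed.
Lemma hS0 : is_hom S0. Proof. exact: degen_hom. Qed.
Lemma hS1 : is_hom S1. Proof. exact: degen_hom. Qed.

Lemma d0s0 y : d0 (s0 y) = y. Proof. by case: (face_degen_eq G 0 0 y isT). Qed.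
Lemma d1s0 y : d1 (s0 y) = y. Proof. by case: (face_degen_eq G 0 0 y isT). Qed.
Lemma D0S0 y : D0 (S0 y) = y. Proof. by case: (face_degen_eq G 1 0 y isT). Qed.
Lemma D1S0 y : D1 (S0 y) = y. Proof. by case: (face_degen_eq G 1 0 y isT). Qed.
Lemma D1S1 y : D1 (S1 y) = y. Proof. by case: (face_degen_eq G 1 1 y isT). Qed.
Lemma D2S1 y : D2 (S1 y) = y. Proof. by case: (face_degen_eq G 1 1 y isT). Qed.
Lemma D0S1 x : D0 (S1 x) = s0 (d0 x). Proof. exact: (face_degen_lt G 0 0 1 x isT). Qed.
Lemma D2S0 x : D2 (S0 x) = s0 (d1 x). Proof. exact: (face_degen_gt G 0 2 0 x isT). Qed.
Lemma ff01 z : d0 (D1 z) = d0 (D0 z). Proof. exact: (face_face G 0 0 1 z isT). Qed.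
Lemma ff02 z : d0 (D2 z) = d1 (D0 z). Proof. exact: (face_face G 0 0 2 z isT). Qed.
Lemma ff12 z : d1 (D2 z) = d1 (D1 z). Proof. exact: (face_face G 0 1 2 z isT). Qed.

Lemma sdiff2E (c : STup G 2 -> int) g2 g1 g0 :
  sdiff G 2 c (g2,(g1,(g0,tt))) =
  c (D0 g2, (d0 g1, tt)) - c (D1 g2, (d1 g1 * g0, tt)) + c (D2 g2 * g1, (g0,tt)) - c (g1,(g0,tt)).
Proof. rewrite /sdiff !big_ord_recr big_ord0 /= !exprS expr0. iring. Qed.

Lemma sdiff1E (b : STup G 1 -> int) g1 g0 :
  sdiff G 1 b (g1,(g0,tt)) = b (d0 g1, tt) - b (d1 g1 * g0, tt) + b (g0, tt).
Proof. rewrite /sdiff !big_ord_recr big_ord0 /= !exprS expr0. iring. Qed.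

Lemma sdd (b : STup G 1 -> int) t : sdiff G 2 (sdiff G 1 b) t = 0.
Proof.
case: t => g2 [g1 [g0 []]].
rewrite sdiff2E !sdiff1E hd0 hd1 ff01 ff02 ff12 -!gmulA. iring.
Qed.

Lemma sdiff2B (c e : STup G 2 -> int) t :
  sdiff G 2 (fun t => c t - e t) t = sdiff G 2 c t - sdiff G 2 e t.
Proof. case: t => g2 [g1 [g0 []]]. rewrite !sdiff2E. iring. Qed.
Lemma sdiff2D (c e : STup G 2 -> int) t :
  sdiff G 2 (fun t => c t + e t) t = sdiff G 2 c t + sdiff G 2 e t.
Proof. case: t => g2 [g1 [g0 []]]. rewrite !sdiff2E. iring. Qed.
Lemma sdiff1B (c e : STup G 1 -> int) t :
  sdiff G 1 (fun t => c t - e t) t = sdiff G 1 c t - sdiff G 1 e t.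
Proof. case: t => g1 [g0 []]. rewrite !sdiff1E. iring. Qed.
Lemma sdiff1D (c e : STup G 1 -> int) t :
  sdiff G 1 (fun t => c t + e t) t = sdiff G 1 c t + sdiff G 1 e t.
Proof. case: t => g1 [g0 []]. rewrite !sdiff1E. iring. Qed.
End Simp.

Section QS.
Variable Q : grp.
Local Notation "x * y" := (gmul x y).
Lemma qdiff2E (c : QTup Q 2 -> int) q1 q2 q3 :
  qdiff Q 2 c (q1,(q2,(q3,tt))) = c (q2,(q3,tt)) - c (q1 * q2,(q3,tt)) + c (q1,(q2 * q3,tt)) - c (q1,(q2,tt)).
Proof. rewrite /qdiff !big_ord_recr big_ord0 /= !exprS expr0. iring. Qed.
Lemma qdiff1E (c : QTup Q 1 -> int) q1 q2 :
  qdiff Q 1 c (q1,(q2,tt)) = c (q2,tt) - c (q1 * q2,tt) + c (q1,tt).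
Proof. rewrite /qdiff !big_ord_recr big_ord0 /= !exprS expr0. iring. Qed.
End QS.

Lemma lin_helper {L R X Y k : int} : X = Y -> L - R = k * (X - Y) -> L = R.
Proof. move=> -> e; apply/eqP; rewrite -subr_eq0 e subrr mulr0 //. Qed.
Lemma lin_helper2 {L R X Y X' Y' k k' : int} : X = Y -> X' = Y' ->
   L - R = k * (X - Y) + k' * (X' - Y') -> L = R.
Proof. move=> -> -> e; apply/eqP; rewrite -subr_eq0 e !subrr !mulr0 addr0 //. Qed.
Ltac lin1 e := first
  [ apply: (lin_helper (k := 1) e); iring
  | apply: (lin_helper (k := -1) e); iring ].
Ltac lin2 e e' := first
  [ apply: (lin_helper2 (k := 1) (k' := 1) e e'); iring
  | apply: (lin_helper2 (k := 1) (k' := -1) e e'); iring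
  | apply: (lin_helper2 (k := -1) (k' := 1) e e'); iring
  | apply: (lin_helper2 (k := -1) (k' := -1) e e'); iring ].

Lemma NG0I (G : sgrp) (x : sg G 1) : face G 0 1 x = gone -> NG G 0 x.
Proof. move=> h k /andP[k1 k2]; have -> : k = 1%N by apply/eqP; rewrite eqn_leq k1 k2. exact: h. Qed.
Lemma NG0E (G : sgrp) (x : sg G 1) : NG G 0 x -> face G 0 1 x = gone.
Proof. by move=> h; apply: h. Qed.
Lemma NG1E1 (G : sgrp) (x : sg G 2) : NG G 1 x -> face G 1 1 x = gone.
Proof. by move=> h; apply: h. Qed.
Lemma NG1E2 (G : sgrp) (x : sg G 2) : NG G 1 x -> face G 1 2 x = gone.
Proof. by move=> h; apply: h. Qed.
Lemma NG1I (G : sgrp) (x : sg G 2) : face G 1 1 x = gone -> face G 1 2 x = gone -> NG G 1 x.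
Proof. move=> h1 h2 k /andP[k1 k2]; case: k k1 k2 => [|[|[|k]]] //= _ _. Qed.

Arguments NG0I {G x}. Arguments NG0E {G x}. Arguments NG1E1 {G x}. Arguments NG1E2 {G x}. Arguments NG1I {G x}.
Fixpoint gpow (A : grp) (z : A) (n : nat) : A :=
  match n with 0 => gone | k.+1 => gmul z (gpow A z k) end.
Arguments gpow {A}.
Lemma gpowD (A : grp) (z : A) i m : gpow z (i + m) = gmul (gpow z i) (gpow z m).
Proof. elim: i => [|i IH] /=; first by rewrite gmul1l. by rewrite IH gmulA. Qed.
Lemma hom_pow (A B : grp) (f : A -> B) (hf : is_hom f) z n : f (gpow z n) = gpow (f z) n.
Proof. elim: n => [|n IH] /=; first exact: hom1. by rewrite hf IH. Qed.
Arguments hom_pow {A B f}.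
Lemma gpow1 (A : grp) n : gpow (@gone A) n = gone.
Proof. elim: n => [|n IH] //=. by rewrite IH gmul1l. Qed.

Section Main.
Variables (G : sgrp) (Q : grp) (p : sg G 0 -> Q).
Hypothesis Hp : presents_pi0 G Q p.
Local Notation d0 := (face G 0 0).
Local Notation d1 := (face G 0 1).
Local Notation D0 := (face G 1 0).
Local Notation D1 := (face G 1 1).
Local Notation D2 := (face G 1 2).
Local Notation s0 := (degen G 0 0).
Local Notation S0 := (degen G 1 0).
Local Notation S1 := (degen G 1 1).
Local Notation "x * y" := (gmul x y).

Lemma ph : is_hom p. Proof. by case: Hp. Qed.
Lemma psurj q : exists y, p y = q. Proof. by case: Hp. Qed.
Lemma pker y : p y = gone <-> BNG G 0 y. Proof. by case: Hp. Qed.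
Definition sigma (q : Q) : sg G 0 := proj1_sig (constructive_indefinite_description _ (psurj q)).
Lemma sigmaP q : p (sigma q) = q.
Proof. exact: (proj2_sig (constructive_indefinite_description _ (psurj q))). Qed.

Lemma BNG0E n : BNG G 0 n -> exists2 x, d1 x = gone & d0 x = n.
Proof. by case=> x /NG0E h1 h2; exists x. Qed.
Lemma BNG0I x : d1 x = gone -> BNG G 0 (d0 x).
Proof. by move=> h; exists x => //; apply: NG0I. Qed.

Lemma samep y y' : p y = p y' -> exists2 n, BNG G 0 n & y' = y * n.
Proof.
move=> e; exists (ginv y * y'); last by rewrite gmulKr.
apply/pker. by rewrite ph (homV ph) e gmulVl.
Qed.

Lemma pd01 x : p (d0 x) = p (d1 x).
Proof.
pose x' := ginv (s0 (d1 x)) * x.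
have h1 : d1 x' = gone by rewrite /x' hd1 (homV (hd1 G)) d1s0 gmulVl.
have /pker := BNG0I _ h1.
rewrite /x' hd0 (homV (hd0 G)) d0s0 ph (homV ph) => e.
by rewrite -(gmulKr (p (d1 x)) (p (d0 x))) e gmul1r.
Qed.

Definition F (h : QTup Q 2 -> int) : STup G 2 -> int := fun t => h (p (d1 t.1), (p t.2.1, tt)).

Lemma Fcoc h : qcocycle Q 2 h -> scocycle G 2 (F h).
Proof.
move=> hc [g2 [g1 [g0 []]]]. rewrite sdiff2E /F /= !hd1 !ph -ff02 pd01 ff12 pd01.
have := hc (p (d1 (D1 g2)), (p (d1 g1), (p g0, tt))). rewrite qdiff2E => e.
lin1 e.
Qed.

Lemma Fcoc_back h : scocycle G 2 (F h) -> qcocycle Q 2 h.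
Proof.
move=> hc [q1 [q2 [q3 []]]].
case: (psurj q1) => y1 <-; case: (psurj q2) => y2 <-; case: (psurj q3) => y3 <-.
have := hc (S0 (s0 y1), (s0 y2, (y3, tt))).
rewrite sdiff2E /F /= D0S0 D1S0 D2S0 hd1 !d1s0 d0s0 !ph => e.
rewrite qdiff2E. lin1 e.
Qed.

Lemma FL h : scobound G 2 (F h) -> qcobound Q 2 h.
Proof.
case=> b hb.
have base y w : h (p y, (p w, tt)) = b (y, tt) - b (y * w, tt) + b (w, tt).
  by have := hb (s0 y, (w, tt)); rewrite sdiff1E /F /= d0s0 d1s0.
have inv y n : BNG G 0 n -> b (y * n, tt) = b (y, tt).
  case/BNG0E => x1 h1 <-.
  have := hb (s0 y * x1, (gone, tt)); rewrite sdiff1E /F /= !hd1 !hd0 h1 d1s0 d0s0 gmul1r.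
  rewrite base => e. lin1 e.
have bs y : b (sigma (p y), tt) = b (y, tt).
  case: (samep _ _ (esym (sigmaP (p y)))) => n nN ->. by rewrite inv.
exists (fun t => b (sigma t.1, tt)) => -[q1 [q2 []]].
rewrite qdiff1E /=.
rewrite -{1}(sigmaP q1) -{1}(sigmaP q2) base.
have -> : q1 * q2 = p (sigma q1 * sigma q2) by rewrite ph !sigmaP.
rewrite bs. iring.
Qed.

Hypothesis Hfin : pi1_finite G.

Lemma BNG1E w : BNG G 1 w -> exists2 y, NG G 1 y & D0 y = w.
Proof. by case=> y h e; exists y. Qed.

Lemma BNG1_closed a b : BNG G 1 a -> BNG G 1 b -> BNG G 1 (ginv a * b).
Proof.
case=> ya ha <-; case=> yb hb <-.
exists (ginv ya * yb); last by rewrite hD0 (homV (hD0 G)).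
apply: NG1I; rewrite ?hD1 ?hD2 ?(homV (hD1 G)) ?(homV (hD2 G)).
  by rewrite (NG1E1 ha) (NG1E1 hb) ginv1 gmul1l.
by rewrite (NG1E2 ha) (NG1E2 hb) ginv1 gmul1l.
Qed.

Lemma pow_diff (z x : sg G 1) i j : BNG G 1 (ginv x * gpow z i) -> BNG G 1 (ginv x * gpow z j) ->
  (i < j)%N -> exists2 n, (0 < n)%N & BNG G 1 (gpow z n).
Proof.
move=> hi hj lij; exists (j - i)%N; first by rewrite subn_gt0.
have := BNG1_closed _ _ hi hj.
rewrite ginvM ginvK -gmulA gmulKr.
by rewrite -{1}(subnKC (ltnW lij)) gpowD gmulKl.
Qed.

Lemma torsion z : d1 z = gone -> d0 z = gone -> exists2 n, (0 < n)%N & BNG G 1 (gpow z n).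
Proof.
move=> h1 h0.
case: Hfin => s [sZ scov].
have zp i : Z1NG G (gpow z i).
  split; first by apply: NG0I; rewrite (hom_pow (hd1 G)) h1 gpow1.
  by rewrite (hom_pow (hd0 G)) h0 gpow1.
have H (i : 'I_(length s).+1) : exists k : 'I_(length s), BNG G 1 (ginv (List.nth k s gone) * gpow z i).
  case: (scov _ (zp i)) => x xin hx.
  case: (List.In_nth _ _ gone xin) => k [/ltP kl kx].
  by exists (Ordinal kl); rewrite /= kx.
pose f i := proj1_sig (constructive_indefinite_description _ (H i)).
have fP i : BNG G 1 (ginv (List.nth (f i) s gone) * gpow z i).
  exact: (proj2_sig (constructive_indefinite_description _ (H i))).
case: (boolP (injectiveb f)) => [/injectiveP inj | /injectivePn [i [j nij fij]]].
  by have := leq_card f inj; rewrite !card_ord ltnn.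
have hi := fP i; have hj := fP j; rewrite fij in hi.
case: (ltngtP i j) => [lij|lji|eij].
- exact: (pow_diff _ _ _ _ hi hj).
- exact: (pow_diff _ _ _ _ hj hi).
- by case/eqP: nij; apply: val_inj.
Qed.

Section Coc.
Variable c : STup G 2 -> int.
Hypothesis hc : scocycle G 2 c.

Local Notation a := (c (gone, (gone, tt))).

Lemma CE g2 g1 g0 : c (D0 g2, (d0 g1, tt)) - c (D1 g2, (d1 g1 * g0, tt)) + c (D2 g2 * g1, (g0,tt)) - c (g1,(g0,tt)) = 0.
Proof. rewrite -sdiff2E; exact: hc. Qed.

Lemma F1 g : c (gone, (g, tt)) = a.
Proof.
have := CE gone gone g.
rewrite !(hom1 (hD0 G)) !(hom1 (hD1 G)) !(hom1 (hD2 G)) (hom1 (hd0 G)) (hom1 (hd1 G)) !gmul1l => e.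
lin1 e.
Qed.

Lemma F2 x g : c (x, (g, tt)) = c (x, (gone, tt)) + c (s0 (d1 x), (g, tt)) - a.
Proof.
have := CE (S0 x) gone g.
rewrite D0S0 D1S0 D2S0 (hom1 (hd0 G)) (hom1 (hd1 G)) gmul1l gmul1r F1 => e.
lin1 e.
Qed.

Lemma F3 y : c (s0 y, (gone, tt)) = a.
Proof.
have := CE (S1 (s0 y)) gone gone.
rewrite D0S1 D1S1 D2S1 (hom1 (hd0 G)) (hom1 (hd1 G)) gmul1l gmul1r d0s0 => e.
lin1 e.
Qed.

Lemma R1 x x1 : d1 x1 = gone ->
  c (x * x1, (gone, tt)) = c (x1, (gone, tt)) + c (x, (gone, tt)) - c (s0 (d0 x), (d0 x1, tt)).
Proof.
move=> h; have := CE (S1 x) x1 gone.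
rewrite D0S1 D1S1 D2S1 h gmul1l => e.
lin1 e.
Qed.

Lemma Vc t n m : c (s0 t, (n, tt)) - c (s0 t, (n * m, tt)) + c (s0 (t * n), (m, tt)) - c (s0 n, (m, tt)) = 0.
Proof.
have := CE (S0 (s0 t)) (s0 n) m.
by rewrite D0S0 D1S0 D2S0 d1s0 d0s0 -(hs0 G) d1s0.
Qed.

Lemma B1 y : NG G 1 y -> c (D0 y, (gone, tt)) = a.
Proof.
move=> hy; have := CE y gone gone.
rewrite (NG1E1 hy) (NG1E2 hy) (hom1 (hd0 G)) (hom1 (hd1 G)) !gmul1l => e.
lin1 e.
Qed.

Lemma upow z n : d1 z = gone -> d0 z = gone ->
  c (gpow z n, (gone, tt)) - a = (c (z, (gone, tt)) - a) *+ n.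
Proof.
move=> h1 h0; elim: n => [|n IH] /=; first by rewrite subrr mulr0n.
rewrite R1; last by rewrite (hom_pow (hd1 G)) h1 gpow1.
rewrite (hom_pow (hd0 G)) h0 gpow1 (hom1 (hs0 G)) mulrS.
move: IH; set X := (_ - _) *+ n => IH.
have -> : c (gpow z n, (gone, tt)) = X + a by rewrite -IH; iring.
iring.
Qed.

Lemma Zt z : d1 z = gone -> d0 z = gone -> c (z, (gone, tt)) = a.
Proof.
move=> h1 h0; case: (torsion _ h1 h0) => n n0 /BNG1E [y hy ey].
have := upow _ n h1 h0; rewrite -ey B1 // subrr => /esym/eqP.
rewrite Num.Theory.mulrn_eq0 subr_eq0 => /orP[/eqP n0'|/eqP //].
by rewrite n0' in n0.
Qed.

Definition w (n : sg G 0) : int :=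
  match excluded_middle_informative (exists x, d1 x = gone /\ d0 x = n) with
  | left h => c (proj1_sig (constructive_indefinite_description _ h), (gone, tt))
  | right _ => 0
  end.

Lemma Wdef x : d1 x = gone -> w (d0 x) = c (x, (gone, tt)).
Proof.
move=> hx; rewrite /w.
case: (excluded_middle_informative _) => [h|h]; last first.
  by case: h; exists x.
case: (constructive_indefinite_description _ h) => x0 [h1 h0] /=.
pose z := ginv x0 * x.
have z1 : d1 z = gone by rewrite /z hd1 (homV (hd1 G)) h1 hx ginv1 gmul1l.
have z0 : d0 z = gone by rewrite /z hd0 (homV (hd0 G)) h0 gmulVl.
have ex : x = x0 * z by rewrite /z gmulKr.
rewrite ex R1 // z0 F3 (Zt z z1 z0). iring.
Qed.

Lemma W x x' : d1 x = gone -> d1 x' = gone ->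
  w (d0 x * d0 x') = w (d0 x) + w (d0 x') - c (s0 (d0 x), (d0 x', tt)).
Proof.
move=> h h'.
have hxx : d1 (x * x') = gone by rewrite hd1 h h' gmul1l.
rewrite -hd0 !Wdef // R1 //. iring.
Qed.

Definition tr g := sigma (p g).
Definition mm g := ginv (tr g) * g.
Definition b g := c (s0 (tr g), (mm g, tt)) - w (mm g).

Lemma mmN g : BNG G 0 (mm g).
Proof. apply/pker; by rewrite /mm /tr ph (homV ph) sigmaP gmulVl. Qed.

Lemma Bclaim g n : BNG G 0 n -> b (g * n) = b g + c (s0 g, (n, tt)) - w n.
Proof.
move=> hn.
have etr : tr (g * n) = tr g by rewrite /tr ph (proj2 (pker n) hn) gmul1r.
have emm : mm (g * n) = mm g * n by rewrite /mm etr gmulA.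
have eg : tr g * mm g = g by rewrite /mm gmulKr.
rewrite /b etr emm.
have Wmn : w (mm g * n) = w (mm g) + w n - c (s0 (mm g), (n, tt)).
  case/BNG0E: (mmN g) => x hx <-. case/BNG0E: hn => x' hx' <-. exact: W.
have := Vc (tr g) (mm g) n.
rewrite eg Wmn => e.
lin1 e.
Qed.

Lemma Uclaim x : c (x, (gone, tt)) = b (d1 x) - b (d0 x) + a.
Proof.
set y := d1 x. pose x1 := ginv (s0 y) * x.
have h1 : d1 x1 = gone by rewrite /x1 hd1 (homV (hd1 G)) d1s0 gmulVl.
have ex : x = s0 y * x1 by rewrite /x1 gmulKr.
have e0 : d0 x = y * d0 x1 by rewrite {1}ex hd0 d0s0.
rewrite e0 Bclaim; last exact: BNG0I.
rewrite {1}ex R1 // Wdef // F3 d0s0. iring.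
Qed.

Definition b' (t : STup G 1) : int := - b t.1.
Definition V y g := c (s0 y, (g, tt)) + b y - b (y * g) + b g.

Lemma Claim1 x g : c (x, (g, tt)) - sdiff G 1 b' (x, (g, tt)) = V (d1 x) g.
Proof. rewrite F2 Uclaim sdiff1E /b' /V /=. iring. Qed.

Lemma CV g2 g1 g0 : V (d1 (D0 g2)) (d0 g1) - V (d1 (D1 g2)) (d1 g1 * g0)
   + V (d1 (D2 g2 * g1)) g0 - V (d1 g1) g0 = 0.
Proof.
have := sdiff2B G c (sdiff G 1 b') (g2, (g1, (g0, tt))).
rewrite hc sdd subr0 sdiff2E !Claim1 => ->. done.
Qed.

Lemma Inv1 x z : V (d0 x) z = V (d1 x) z.
Proof.
have e1 := CV (S1 x) (s0 z) gone.
have e2 := CV (S0 (s0 (d1 x))) (s0 z) gone.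
rewrite D0S1 D1S1 D2S1 !d1s0 d0s0 hd1 d1s0 in e1.
rewrite D0S0 D1S0 D2S0 !d1s0 d0s0 hd1 !d1s0 in e2.
lin2 e1 e2.
Qed.

Lemma Inv2 y g1 : V y (d0 g1) = V y (d1 g1).
Proof.
have e1 := CV (S0 (s0 y)) g1 gone.
have e2 := CV (S0 (s0 y)) (s0 (d1 g1)) gone.
rewrite D0S0 D1S0 D2S0 !d1s0 hd1 d1s0 in e1.
rewrite D0S0 D1S0 D2S0 !d1s0 d0s0 hd1 !d1s0 in e2.
lin2 e1 e2.
Qed.

Lemma Vp y y' g g' : p y = p y' -> p g = p g' -> V y g = V y' g'.
Proof.
move=> ey eg.
case: (samep _ _ ey) => n /BNG0E [x1 h1 <-] ->.
case: (samep _ _ eg) => m /BNG0E [x2 h2 <-] ->.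
have -> : V (y * d0 x1) (g * d0 x2) = V y (g * d0 x2).
  have := Inv1 (s0 y * x1) (g * d0 x2). by rewrite hd0 hd1 d0s0 d1s0 h1 gmul1r.
have := Inv2 y (s0 g * x2). by rewrite hd0 hd1 d0s0 d1s0 h2 gmul1r.
Qed.

Definition fc (t : QTup Q 2) : int := V (sigma t.1) (sigma t.2.1).

Lemma K t : F fc t = c t - sdiff G 1 b' t.
Proof.
case: t => x [g []]. rewrite Claim1 /F /fc /=.
apply: Vp; by rewrite sigmaP.
Qed.
End Coc.

Lemma sdiff2_ext (c e : STup G 2 -> int) : (forall t, c t = e t) -> forall t, sdiff G 2 c t = sdiff G 2 e t.
Proof. move=> h [g2 [g1 [g0 []]]]; by rewrite !sdiff2E !h. Qed.

Lemma main_iso : Hn_iso G Q 2.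
Proof.
exists fc; split.
- move=> a ha. apply: Fcoc_back => t.
  by rewrite (sdiff2_ext _ _ (K a ha)) sdiff2B ha sdd subr0.
- move=> a a' ha ha' [β hβ]. apply: FL.
  exists (fun t => β t - b' a t + b' a' t) => t.
  have -> : F (fun y => fc a y - fc a' y) t = F (fc a) t - F (fc a') t by [].
  rewrite !K //. case: t => x [g []]. rewrite !sdiff1E /=.
  have := hβ (x, (g, tt)); rewrite sdiff1E => h. lin1 h.
- move=> a a' ha ha'.
  have hA : scocycle G 2 (fun x => a x + a' x) by move=> t; rewrite sdiff2D ha ha' addr0.
  apply: FL.
  exists (fun t => - b' (fun x => a x + a' x) t + b' a t + b' a' t) => t.
  have -> : F (fun y => fc (fun x => a x + a' x) y - fc a y - fc a' y) t
     = F (fc (fun x => a x + a' x)) t - F (fc a) t - F (fc a') t by [].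
  rewrite !K //. case: t => x [g []]. rewrite !sdiff1E /=. iring.
- move=> a ha [β hβ].
  exists (fun t => β (p t.1, tt) + b' a t) => t.
  have := K a ha t. case: t => x [g []].
  rewrite /F /= hβ qdiff1E sdiff1E => e.
  rewrite sdiff1E /= ph pd01.
  apply: (lin_helper (k := -1) e). iring.
- move=> h hh. exists (F h); first exact: Fcoc.
  apply: FL. exists (b' (F h)) => t.
  have -> : F (fun y => h y - fc (F h) y) t = F h t - F (fc (F h)) t by [].
  rewrite K; last exact: Fcoc. iring.
Qed.
End Main.

Theorem mainTheorem17 (G : sgrp) (Q : grp) (p : sg G 0 -> Q) :
  presents_pi0 G Q p -> pi1_finite G -> Hn_iso G Q 2.
Proof. move=> Hp Hf. exact: (main_iso G Q p Hp Hf). Qed.
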